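(* Let $\delta\le\frac14$ and let $\mathcal{I}$ be a $\delta$-ONI instance with $n$ agents and $|N^1_1|\le n\left(\frac14-\delta\right)/\left(\frac14+\frac\delta3\right)$. Then every agent $i\in N^1_1$ receives a bag of value at least $\left(\frac34+\delta\right)\mathrm{MMS}_i$ at the end of Algorithm $\mathtt{approxMMS1}(\mathcal{I},\delta)$.
   Context: Instance: agents $[n]$, goods $[m]$, additive valuations; goods with index larger than $m$ are dummy goods of value 0; $\mathrm{MMS}_i$ is the max over partitions of the goods into $n$ bundles of the minimum bundle value for $i$. Ordered: $v_i(1)\ge\dots\ge v_i(m)$ for all $i$. Normalized: every agent $i$ has an MMS partition with all $n$ bundles of value exactly 1 to $i$. $\alpha$-irreducible: for every $i$, $v_i(1)<\alpha$, $v_i(\{2n-1,2n,2n+1\})<\alpha$, $v_i(\{3n-2,\dots,3n+1\})<\alpha$, $v_i(\{1,2n+1\})<\alpha$. $\delta$-ONI: ordered, normalized, $(3/4+\delta)$-irreducible. $B_k=\{k,2n-k+1\}$ ($k\in[n]$); $N^1=\{i:v_i(B_k)\le1\ \forall k\}$; $N^1_1=\{i\in N^1:v_i(2n+1)\ge\frac14-5\delta\}$. Algorithm $\mathtt{approxMMS1}(\mathcal{I},\delta)$: $\alpha=3/4+\delta$, bags $B_1,\dots,B_n$. Phase 1: while some unassigned agent $i$ and unassigned bag $B$ have $v_i(B)\ge\alpha$, assign such $B$ to an agent valuing it at least $\alpha$, choosing an agent of $N^1_1$ whenever one qualifies. Phase 2: process remaining bags one by one; for the current bag $B$, while no unassigned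 agent values it at least $\alpha$, add an arbitrary unused good with index $>2n$; then assign $B$ to an unassigned agent valuing it at least $\alpha$, preferring $N^1_1$. (If a good must be added but none is left, the algorithm stops.) *)

(* Defs.v *)
From HB Require Import structures.
From mathcomp Require Import all_boot all_order all_algebra.
Set Implicit Arguments. Unset Strict Implicit. Unset Printing Implicit Defensive.
Import Order.TTheory GRing.Theory Num.Theory.
Local Open Scope ring_scope.

(* Goods are natural-number indices 1..m (1-based, as in the
   paper); v i g is agent i's value of good g.  Indices > m are dummy goods of
   value 0 (imposed by [valid_instance]); index 0 is never used. *)

Definition vset (R : realFieldType) (n : nat) (v : 'I_n -> nat -> R)
  (i : 'I_n) (S : seq nat) : R := \sum_(g <- S) v i g.

(* A partition of the goods [m] into n bundles is a map from goods to bundles;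
   the good g : 'I_m stands for the good with index g+1. *)
Definition bundle (R : realFieldType) (n m : nat) (v : 'I_n -> nat -> R)
  (i : 'I_n) (a : {ffun 'I_m -> 'I_n}) (j : 'I_n) : R :=
  \sum_(g : 'I_m | a g == j) v i g.+1.

Definition is_MMS (R : realFieldType) (n m : nat) (v : 'I_n -> nat -> R)
  (i : 'I_n) (mu : R) : Prop :=
  (exists a : {ffun 'I_m -> 'I_n}, forall j, mu <= bundle v i a j) /\
  (forall a : {ffun 'I_m -> 'I_n}, exists j, bundle v i a j <= mu).

Definition valid_instance (R : realFieldType) (n m : nat) (v : 'I_n -> nat -> R) :=
  (forall i g, 0 <= v i g) /\ (forall i g, (m < g)%N -> v i g = 0).

Definition ordered (R : realFieldType) (n m : nat) (v : 'I_n -> nat -> R) :=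
  forall i g, (1 <= g)%N -> (g < m)%N -> v i g.+1 <= v i g.

Definition normalized (R : realFieldType) (n m : nat) (v : 'I_n -> nat -> R) :=
  forall i, exists a : {ffun 'I_m -> 'I_n},
    (forall j, bundle v i a j = 1) /\
    (forall a' : {ffun 'I_m -> 'I_n}, exists j, bundle v i a' j <= 1).

Definition irreducible (R : realFieldType) (n : nat) (v : 'I_n -> nat -> R)
  (alpha : R) :=
  forall i,
    [/\ v i 1%N < alpha,
        vset v i [:: (2 * n - 1)%N; (2 * n)%N; (2 * n + 1)%N] < alpha,
        vset v i [:: (3 * n - 2)%N; (3 * n - 1)%N; (3 * n)%N; (3 * n + 1)%N] < alpha
      & vset v i [:: 1%N; (2 * n + 1)%N] < alpha].

Definition ONI (R : realFieldType) (n m : nat) (v : 'I_n -> nat -> R) (delta : R) :=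
  [/\ ordered m v, normalized m v & irreducible v (3/4 + delta)].

(* initial bags: bag k : 'I_n is the paper's B_{k+1} = {k+1, 2n-k} *)
Definition bag0 (n : nat) (k : 'I_n) : seq nat := [:: k.+1; (2 * n - k)%N].

Definition inN1 (R : realFieldType) (n : nat) (v : 'I_n -> nat -> R) (i : 'I_n) : bool :=
  [forall k : 'I_n, vset v i (bag0 k) <= 1].

Definition inN11 (R : realFieldType) (n : nat) (delta : R) (v : 'I_n -> nat -> R)
  (i : 'I_n) : bool :=
  inN1 v i && (1/4 - 5 * delta <= v i (2 * n + 1)%N).

Record state (n : nat) := State {
  owner : 'I_n -> option 'I_n;   (* bag k |-> agent it is assigned to *)
  added : 'I_n -> seq nat;       (* goods added to bag k in phase 2 *)
  phase2 : bool;                 (* false = phase 1, true = phase 2 *)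
  cur : option 'I_n              (* bag currently processed in phase 2 *)
}.

Definition init_state (n : nat) : state n :=
  State (fun _ => None) (fun _ => [::]) false None.

Definition bag (n : nat) (s : state n) (k : 'I_n) : seq nat := bag0 k ++ added s k.

Definition assigned (n : nat) (s : state n) (i : 'I_n) : Prop :=
  exists k, owner s k = Some i.

Definition upd (n : nat) (T : Type) (f : 'I_n -> T) (k : 'I_n) (x : T) : 'I_n -> T :=
  fun k' => if k' == k then x else f k'.

Section Alg.
Variables (R : realFieldType) (n m : nat) (v : 'I_n -> nat -> R) (delta : R).
Local Notation alpha := (3/4 + delta).

Definition eligible (s : state n) (B : seq nat) (j : 'I_n) : Prop :=
  [/\ ~ assigned s j, alpha <= vset v j B &
      (inN11 delta v j \/
       ~ (exists j', [/\ ~ assigned s j', inN11 delta v j' & alpha <= vset v j' B]))].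

Inductive alg_step : state n -> state n -> Prop :=
| step_p1 s k j :
    phase2 s = false -> owner s k = None -> eligible s (bag s k) j ->
    alg_step s (State (upd (owner s) k (Some j)) (added s) false None)
| step_p1_end s :
    phase2 s = false ->
    ~ (exists k j, [/\ owner s k = None, ~ assigned s j & alpha <= vset v j (bag s k)]) ->
    alg_step s (State (owner s) (added s) true None)
| step_select s k :
    phase2 s = true -> cur s = None -> owner s k = None ->
    alg_step s (State (owner s) (added s) true (Some k))
| step_add s k g :
    phase2 s = true -> cur s = Some k ->
    (forall j, ~ assigned s j -> vset v j (bag s k) < alpha) ->
    (2 * n < g)%N -> (g <= m)%N -> (forall k', g \notin added s k') ->
    alg_step s (State (owner s) (upd (added s) k (g :: added s k)) true (Some k))
| step_assign s k j :
    phase2 s = true -> cur s = Some k -> eligible s (bag s k) j ->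
    alg_step s (State (upd (owner s) k (Some j)) (added s) true None).
End Alg.

Inductive reach (T : Type) (step : T -> T -> Prop) (x : T) : T -> Prop :=
| reach_refl : reach step x x
| reach_step y z : reach step x y -> step y z -> reach step x z.

(* the algorithm has ended (normally, or stopped for lack of goods) *)
Definition terminal (T : Type) (step : T -> T -> Prop) (x : T) : Prop :=
  ~ (exists y, step x y).

(* Main.v *)
Require Import Defs.
From HB Require Import structures.
From mathcomp Require Import all_boot all_order all_algebra.
From mathcomp Require Import lra zify.
From Stdlib Require Import Classical.
Set Implicit Arguments. Unset Strict Implicit. Unset Printing Implicit Defensive.
Import Order.TTheory GRing.Theory Num.Theory.
Local Open Scope ring_scope.

Lemma sum_subset_le (R : realFieldType) (F : nat -> R) (s t : seq nat) :
  (forall x, 0 <= F x) -> uniq s -> {subset s <= t} ->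
  \sum_(x <- s) F x <= \sum_(x <- t) F x.
Proof.
move=> F0; elim: s t => [|x s IH] t /=.
  by move=> _ _; rewrite big_nil; apply: sumr_ge0.
case/andP=> xs us sub.
have xt : x \in t by apply: sub; rewrite inE eqxx.
rewrite (perm_big _ (perm_to_rem xt)) !big_cons lerD2l.
apply: IH => // y ys.
have yt : y \in t by apply: sub; rewrite inE ys orbT.
have : y \in x :: rem x t by rewrite -(perm_mem (perm_to_rem xt)).
rewrite inE; case/orP=> // /eqP yx.
by move: xs; rewrite -yx ys.
Qed.

Lemma v_mono (R : realFieldType) (n m : nat) (v : 'I_n -> nat -> R) i g h :
  valid_instance m v -> ordered m v -> (1 <= g)%N -> (g <= h)%N -> v i h <= v i g.
Proof.
move=> [v0 vm] ord g1; elim: h => [|h IH]; first by rewrite leqn0 => /eqP ->.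
rewrite leq_eqVlt => /orP [/eqP -> //|]; rewrite ltnS => gh.
apply: le_trans (IH gh).
case: (ltnP h m) => hm.
  by apply: ord => //; apply: leq_trans gh.
by rewrite (vm i h.+1) ?ltnS // v0.
Qed.
Record Inv (R : realFieldType) (n : nat) (v : 'I_n -> nat -> R) (delta : R)
  (i : 'I_n) (s : state n) : Prop := {
  inv1 : forall k j, owner s k = Some j -> 3/4 + delta <= vset v j (bag s k);
  inv2 : forall k, cur s = Some k -> owner s k = None /\ phase2 s;
  inv3 : forall k k' j, owner s k = Some j -> owner s k' = Some j -> k = k';
  inv4 : forall k j, owner s k = Some j -> ~ assigned s i ->
           3/4 + delta <= vset v i (bag s k) -> inN11 delta v j;
  inv5 : phase2 s -> forall k j, owner s k = None -> cur s <> Some k ->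
           ~ assigned s j -> vset v j (bag s k) < 3/4 + delta;
  inv6 : forall k, added s k <> [::] ->
           assigned s i \/ vset v i (bag s k) < 3/4 + delta + v i (2 * n + 1)%N
}.

Lemma Inv_init (R : realFieldType) (n m : nat) (v : 'I_n -> nat -> R) delta i :
  Inv v delta i (init_state n).
Proof. by split => //=. Qed.

Lemma assigned_upd n (s : state n) k j a p c x :
  owner s k = None ->
  assigned (State (upd (owner s) k (Some j)) a p c) x <-> x = j \/ assigned s x.
Proof.
move=> ok; split.
  case=> k'; rewrite /upd /=; case: eqP => [_ [<-]|_ h]; first by left.
  by right; exists k'.
case=> [->|[k' h]]; first by exists k; rewrite /upd /= eqxx.
exists k'; rewrite /upd /=; case: eqP => // e.
by rewrite e ok in h.
Qed.

Lemma vset_cat (R : realFieldType) n (v : 'I_n -> nat -> R) i s1 s2 :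
  vset v i (s1 ++ s2) = vset v i s1 + vset v i s2.
Proof. by rewrite /vset big_cat. Qed.

Lemma vset_cons (R : realFieldType) n (v : 'I_n -> nat -> R) i g s :
  vset v i (g :: s) = v i g + vset v i s.
Proof. by rewrite /vset big_cons. Qed.

Lemma Inv_assign (R : realFieldType) (n : nat) (v : 'I_n -> nat -> R) delta i
  (s : state n) k j (p : bool) :
  inN11 delta v i -> Inv v delta i s -> owner s k = None ->
  eligible v delta s (bag s k) j -> (p -> cur s = Some k) ->
  Inv v delta i (State (upd (owner s) k (Some j)) (added s) p None).
Proof.
move=> iN [I1 I2 I3 I4 I5 I6] ok [ja jv jel] pc.
have AU := @assigned_upd n s k j (added s) p None _ ok.
split => /=.
- move=> k1 j1; rewrite /upd; case: eqP => [-> [<-]|_ /I1] //.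
- by [].
- move=> k1 k2 j1; rewrite /upd; case: eqP => [->|ne1]; case: eqP => [->|ne2] //.
  + by move=> [<-] h; case: ja; exists k2.
  + by move=> h [e]; case: ja; exists k1; rewrite e.
  + exact: I3.
- move=> k1 j1; rewrite /upd; case: eqP => [-> [<-]|ne h] na hv.
  + case: jel => // nex; exfalso; apply: nex; exists i; split => //.
    by move=> ai; apply: na; apply/AU; right.
  + by apply: I4 h _ hv => ai; apply: na; apply/AU; right.
- move=> pp k1 j1; rewrite /upd; case: eqP => // ne1 ok1 _ na.
  apply: I5 => //; first by have := I2 k (pc pp); case.
  + by rewrite (pc pp) => -[e]; apply: ne1; rewrite e.
  + by move=> aj; apply: na; apply/AU; right.
- move=> k1 /I6 [ai|]; [left; apply/AU; right|right] => //.
Qed.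

Lemma bag_add n (s : state n) k g k1 :
  bag (State (owner s) (upd (added s) k (g :: added s k)) true (Some k)) k1 =
  if k1 == k then bag0 k ++ g :: added s k else bag s k1.
Proof. by rewrite /bag /upd /=; case: eqP => // ->. Qed.

Lemma Inv_step (R : realFieldType) (n m : nat) (v : 'I_n -> nat -> R) delta i s s' :
  valid_instance m v -> ordered m v -> inN11 delta v i ->
  Inv v delta i s -> alg_step m v delta s s' -> Inv v delta i s'.
Proof.
move=> val ord iN inv st; case: st inv.
- move=> {}s k j p1 ok el inv.
  by apply: Inv_assign.
- move=> {}s p1 nex [I1 I2 I3 I4 I5 I6]; split => //=.
  move=> _ k j ok _ na; rewrite ltNge; apply/negP => h; apply: nex.
  by exists k, j; split.
- move=> {}s k p2 cn ok [I1 I2 I3 I4 I5 I6]; split => //=.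
  + by move=> k1 [<-].
  + by move=> _ k1 j ok1 ne na; apply: I5 => //; rewrite cn.
- move=> {}s k g p2 ck hlt g2n gm gnew [I1 I2 I3 I4 I5 I6].
  have ok := (I2 k ck).1.
  split.
  + move=> k1 j h; rewrite bag_add; case: eqP => [e|_]; last exact: I1 h.
    by rewrite /= e ok in h.
  + by move=> k1 /= [<-]; split.
  + exact: I3.
  + move=> k1 j h na; rewrite bag_add; case: eqP => [e|_]; last exact: I4 h na.
    by rewrite /= e ok in h.
  + move=> _ k1 j ok1 ne na; rewrite bag_add; case: eqP => [e|_].
      by rewrite e in ne.
    by apply: I5 => //; rewrite ck.
  + move=> k1; rewrite bag_add /= /upd; case: (k1 =P k) => [e|_] ne; last exact: I6.
    subst k1.
    case: (classic (assigned s i)) => [a|na]; [by left|right].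
    have := hlt i na; rewrite /bag !vset_cat vset_cons.
    have : v i g <= v i (2 * n + 1)%N.
      by apply: (v_mono _ val ord) => //; rewrite addn1.
    move=> h1; rewrite /vset /bag0 /= !big_cons big_nil => h2; lra.
- move=> {}s k j p2 ck el inv.
  by apply: Inv_assign => //; exact: ((inv2 inv) k ck).1.
Qed.

Lemma Inv_reach (R : realFieldType) (n m : nat) (v : 'I_n -> nat -> R) delta i s :
  valid_instance m v -> ordered m v -> inN11 delta v i ->
  reach (alg_step m v delta) (init_state n) s -> Inv v delta i s.
Proof.
move=> val ord iN; elim => [|y z _ IH st]; first exact: Inv_init.
exact: Inv_step st.
Qed.

Lemma elig_exists (R : realFieldType) (n : nat) (v : 'I_n -> nat -> R) delta
  (s : state n) B j :
  ~ assigned s j -> 3/4 + delta <= vset v j B -> exists j', eligible v delta s B j'.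
Proof.
move=> na hj.
case: (classic (exists j', [/\ ~ assigned s j', inN11 delta v j' & 3/4 + delta <= vset v j' B])).
  by move=> [j' [a b c]]; exists j'; split => //; left.
by move=> nex; exists j; split => //; right.
Qed.

Lemma sum_iota (R : realFieldType) (F : nat -> R) m :
  \sum_(g <- iota 1 m) F g = \sum_(g < m) F g.+1.
Proof.
have -> : iota 1 m = index_iota 1 m.+1 by rewrite /index_iota subSS subn0.
by rewrite big_add1 /= big_mkord.
Qed.

Lemma total_n (R : realFieldType) (n m : nat) (v : 'I_n -> nat -> R) i :
  normalized m v -> \sum_(g <- iota 1 m) v i g = n%:R.
Proof.
move=> /(_ i) [a [ha _]].
rewrite sum_iota (partition_big a predT) //=.
transitivity (\sum_(j < n) (1:R)).
  by apply: eq_bigr => j _; rewrite -(ha j) /bundle.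
by rewrite sumr_const card_ord.
Qed.

Lemma sum_bags_ge (R : realFieldType) (n m : nat) (v : 'I_n -> nat -> R) i (s : state n) :
  valid_instance m v -> normalized m v ->
  (forall g, (2 * n < g)%N -> (g <= m)%N -> exists k, g \in added s k) ->
  n%:R <= \sum_(k < n) vset v i (bag s k).
Proof.
move=> [v0 _] norm cov.
rewrite -(total_n i norm).
have -> : \sum_(k < n) vset v i (bag s k) =
    \sum_(g <- flatten [seq bag s k | k <- index_enum 'I_n]) v i g.
  by rewrite big_flatten big_map.
apply: sum_subset_le => //; first exact: iota_uniq.
move=> g; rewrite mem_iota => /andP [g1 gm].
have H : exists k : 'I_n, g \in bag s k.
  case: (leqP g (2 * n)) => g2.
    case: (leqP g n) => gn.
      have kn : (g.-1 < n)%N by lia.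
      exists (Ordinal kn); rewrite /bag /bag0 /= !inE.
      by apply/orP; left; apply/eqP; lia.
    have kn : (2 * n - g < n)%N by lia.
    exists (Ordinal kn); rewrite /bag /bag0 /= !inE.
    by apply/orP; right; apply/orP; left; apply/eqP; lia.
  have gm' : (g <= m)%N by lia.
  have [k hk] := cov g g2 gm'.
  by exists k; rewrite /bag mem_cat hk orbT.
case: H => k hk; apply/flattenP; exists (bag s k) => //.
by apply: map_f; rewrite mem_index_enum.
Qed.

Lemma count_contra (R : realFieldType) n (x : 'I_n -> R) (alpha c : R)
  (S : {set 'I_n}) k0 :
  k0 \notin S -> (forall k, k \in S -> x k <= alpha + c) ->
  (forall k, k \notin S -> x k < alpha) -> n%:R <= \sum_k x k ->
  n%:R < n%:R * alpha + #|S|%:R * c.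
Proof.
move=> k0S hS hN hsum.
have : \sum_k x k < \sum_k (alpha + (if k \in S then c else 0)).
  rewrite (bigD1 k0) //= [X in _ < X](bigD1 k0) //=.
  apply: ltr_leD; first by rewrite (negbTE k0S) addr0; apply: hN.
  apply: ler_sum => k _; case: ifP => kS; first exact: hS.
  by rewrite addr0; apply/ltW/hN; rewrite kS.
rewrite big_split /= sumr_const card_ord -big_mkcond /= sumr_const.
rewrite -[alpha *+ n]mulr_natl -[c *+ _]mulr_natl; lra.
Qed.

Lemma arithA (R : realFieldType) (n s : nat) (alpha : R) :
  alpha <= 1 -> (s <= n)%N -> n%:R < n%:R * alpha + s%:R * (1 - alpha) -> False.
Proof.
move=> a1 sn h.
have : s%:R * (1 - alpha) <= n%:R * (1 - alpha).
  by apply: ler_wpM2r; [lra|rewrite ler_nat].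
lra.
Qed.

Lemma arithB (R : realFieldType) (n a s : nat) (delta vv : R) :
  0 <= vv -> 3 * vv < 3/4 + delta ->
  a%:R <= n%:R * (1/4 - delta) / (1/4 + delta/3) -> (s.+1 <= a)%N ->
  n%:R < n%:R * (3/4 + delta) + s%:R * vv -> False.
Proof.
move=> v0 v3 ha sa h.
have pos : 0 < 1/4 + delta/3 by lra.
rewrite ler_pdivlMr // in ha.
have h1 : s%:R * vv <= s%:R * ((3/4 + delta)/3).
  by apply: ler_wpM2l; [exact: ler0n|lra].
have h2 : s%:R + 1 <= a%:R :> R by rewrite natr1 ler_nat.
have h3 : (s%:R + 1) * (1/4 + delta/3) <= a%:R * (1/4 + delta/3).
  by apply: ler_wpM2r; [lra|].
lra.
Qed.

Unset Implicit Arguments.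

Theorem lemma22 (R : realFieldType) (n m : nat) (v : 'I_n -> nat -> R) (delta : R) :
  delta <= 1/4 ->
  valid_instance m v ->
  ONI m v delta ->
  (#|[set i | inN11 delta v i]|%:R <= n%:R * (1/4 - delta) / (1/4 + delta / 3)) ->
  forall s : state n,
  reach (alg_step m v delta) (init_state n) s ->
  terminal (alg_step m v delta) s ->
  forall i : 'I_n, inN11 delta v i ->
  forall mu : R, is_MMS m v i mu ->
  exists k : 'I_n, owner s k = Some i /\ (3/4 + delta) * mu <= vset v i (bag s k).
Proof.
move=> dle val [ord norm irr] hcard s rs term i iN mu [[a1 ha1] ha2].
have inv : Inv v delta i s by apply: (Inv_reach val ord iN rs).
case: inv => I1 I2 I3 I4 I5 I6.
have mu1 : mu = 1.
  have [a [hA hA2]] := norm i.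
  apply/eqP; rewrite eq_le; apply/andP; split.
    have [j hj] := hA2 a1; exact: le_trans (ha1 j) hj.
  by have [j hj] := ha2 a; rewrite -(hA j).
suff [k hk] : assigned s i.
  by exists k; split => //; rewrite mu1 mulr1; apply: I1.
apply: NNPP => na.
case p2: (phase2 s); last first.
  case: (classic (exists k j, [/\ owner s k = None, ~ assigned s j &
                    3/4 + delta <= vset v j (bag s k)])) => [[k [j [ok naj hj]]]|nex].
    have [j' el] := elig_exists naj hj.
    by apply: term; eexists; apply: step_p1 el.
  by apply: term; eexists; apply: step_p1_end.
case ck: (cur s) => [k0|]; last first.
  case: (classic (exists k, owner s k = None)) => [[k ok]|nall].
    by apply: term; eexists; apply: step_select ok.
  pose f k := odflt i (owner s k).
  have own : forall k, owner s k = Some (f k).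
    move=> k; rewrite /f; case e: (owner s k) => //=.
    by case: nall; exists k.
  have inj : injective f.
    by move=> k1 k2 e; apply: (I3 _ _ (f k1)); [exact: own|rewrite e; exact: own].
  have [g gK Kg] := injF_bij inj.
  apply: na; exists (g i); have := own (g i); by rewrite (Kg i).
have hk0 : forall j, ~ assigned s j -> vset v j (bag s k0) < 3/4 + delta.
  move=> j naj; rewrite ltNge; apply/negP => hj.
  have [j' el] := elig_exists naj hj.
  by apply: term; eexists; apply: step_assign p2 ck el.
have cov : forall g, (2 * n < g)%N -> (g <= m)%N -> exists k, g \in added s k.
  move=> g g1 g2; apply: NNPP => nex; apply: term; eexists.
  apply: (step_add p2 ck hk0 g1 g2) => k; apply/negP => gk; apply: nex.
  by exists k.
have hsum := sum_bags_ge i val norm cov.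
pose S := [set k | 3/4 + delta <= vset v i (bag s k)].
have k0S : k0 \notin S by rewrite inE -ltNge; apply: hk0.
have hN : forall k, k \notin S -> vset v i (bag s k) < 3/4 + delta.
  by move=> k; rewrite inE -ltNge.
have xb : forall k, vset v i (bag s k) <= 1 \/
                    vset v i (bag s k) < 3/4 + delta + v i (2 * n + 1)%N.
  move=> k; case e: (added s k) => [|g l].
    left; rewrite /bag e cats0.
    by move/andP: iN => [/forallP h1 _]; exact: h1 k.
  case: (I6 k); [by rewrite e| move=> ai; by case: na| by right].
have cardS : (#|S|.+1 <= #|[set j | inN11 delta v j]|)%N.
  pose f k := odflt i (owner s k).
  have ownS : forall k, k \in S -> owner s k = Some (f k).
    move=> k kS; rewrite /f; case e: (owner s k) => //=; exfalso.
    move: kS; rewrite inE; apply/negP; rewrite -ltNge.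
    case: (k =P k0) => [->|ne]; first exact: hk0.
    by apply: I5 => //; rewrite ck => -[e']; apply: ne.
  have fS : forall k, k \in S -> f k \in [set j | inN11 delta v j] :\ i.
    move=> k kS; rewrite !inE; apply/andP; split.
      apply/eqP => e; apply: na; exists k; rewrite -e; exact: ownS.
    by apply: (I4 k (f k) (ownS k kS) na); move: kS; rewrite inE.
  have injS : {in S &, injective f}.
    move=> k1 k2 h1 h2 e; apply: (I3 _ _ (f k1)); first exact: ownS.
    by rewrite e; exact: ownS.
  rewrite -(card_in_imset injS) (cardsD1 i [set j | inN11 delta v j]) inE iN add1n ltnS.
  apply: subset_leq_card; apply/subsetP => y /imsetP [k kS ->]; exact: fS.
have an : (#|[set j | inN11 delta v j]| <= n)%N.
  by apply: leq_trans (max_card _) _; rewrite card_ord.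
have n1 : (1 <= n)%N by case: (i) => j; lia.
have v2 : 3 * v i (2 * n + 1)%N < 3/4 + delta.
  have [_ h _ _] := irr i; move: h; rewrite /vset !big_cons big_nil addr0.
  have e1 : v i (2 * n + 1)%N <= v i (2 * n)%N.
    by apply: (v_mono _ val ord); lia.
  have e2 : v i (2 * n)%N <= v i (2 * n - 1)%N.
    by apply: (v_mono _ val ord); lia.
  lra.
have v0 : 0 <= v i (2 * n + 1)%N by apply: val.1.
case: (lerP (3/4 + delta + v i (2 * n + 1)%N) 1) => hc.
  apply: (@arithA R n #|S| (3/4 + delta)); [lra|lia|].
  apply: (count_contra (x := fun k => vset v i (bag s k)) k0S _ hN hsum).
  by move=> k _; case: (xb k) => h; lra.
apply: (@arithB R n _ #|S| delta (v i (2 * n + 1)%N) v0 v2 hcard cardS).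
apply: (count_contra (x := fun k => vset v i (bag s k)) k0S _ hN hsum).
by move=> k _; case: (xb k) => h; lra.
Qed.
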